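(* For all integers $1\le t\le n$, both the $t$-path ideal $I_t(L_n)$ and its Alexander dual $I_t(L_n)^{\vee}$ are normally torsion-free ideals of $S=K[x_1,\ldots,x_n]$.
   Context: $K$ is a field, $S=K[x_1,\ldots,x_n]$. $L_n$ is the line graph on vertices $x_1,\ldots,x_n$ with edges $\{x_j,x_{j+1}\}$, $j=1,\ldots,n-1$. The $t$-path ideal is $I_t(L_n)=(u_1,\ldots,u_{n-t+1})$ with $u_i=x_ix_{i+1}\cdots x_{i+t-1}$. For a squarefree monomial ideal $I$ whose minimal generators are $x_{G_1},\ldots,x_{G_m}$ (with $x_G=\prod_{i\in G}x_i$), the Alexander dual $I^\vee$ is the ideal generated by all $x_C$ with $C\subseteq[n]$ satisfying $C\cap G_j\ne\emptyset$ for all $j$ (vertex covers). An ideal $I$ is normally torsion-free if $\mathrm{Ass}(S/I^s)=\mathrm{Ass}(S/I)$ for all $s\ge1$. *)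

(* Defs.v *)
From HB Require Import structures.
From mathcomp Require Import all_boot all_order all_algebra.
From mathcomp Require Import mpoly.
Set Implicit Arguments. Unset Strict Implicit. Unset Printing Implicit Defensive.
Import GRing.Theory.
Local Open Scope ring_scope.

(* S = K[x_1,...,x_n] is {mpoly K[n]}; variable x_(j+1) is 'X_j, j : 'I_n. *)

Section Ideals.
Variables (K : fieldType) (n : nat).
Local Notation S := {mpoly K[n]}.

Definition pset := S -> Prop.

Definition ideal_gen (A : pset) : pset := fun p =>
  exists l : seq (S * S), (forall q, q \in l -> A q.2) /\
     p = \sum_(q <- l) q.1 * q.2.

Definition is_ideal (I : pset) : Prop :=
  [/\ I 0, (forall a b, I a -> I b -> I (a + b)) & (forall r a, I a -> I (r * a))].

Definition is_prime_ideal (P : pset) : Prop :=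
  [/\ is_ideal P, ~ P 1 & (forall a b, P (a * b) -> P a \/ P b)].

Definition ideal_mul (I J : pset) : pset :=
  ideal_gen (fun p => exists a b, [/\ I a, J b & p = a * b]).

Definition ideal_pow (I : pset) (s : nat) : pset :=
  iter s (ideal_mul I) (fun _ => True).

(* P \in Ass(S/J): P prime and P = (J : f) for some f in S *)
Definition is_assoc_prime (J P : pset) : Prop :=
  is_prime_ideal P /\ exists f : S, forall g, P g <-> J (g * f).

Definition normally_torsion_free (I : pset) : Prop :=
  forall s, (1 <= s)%N -> forall P : pset,
    is_assoc_prime (ideal_pow I s) P <-> is_assoc_prime I P.

Definition xmon (G : {set 'I_n}) : S := \prod_(j in G) 'X_j.

(* the t-path ideal I_t(L_n): generators u_i = x_i ... x_{i+t-1},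
   i = 1..n-t+1; 0-indexed: support G_i = {i, ..., i+t-1}, i = 0..n-t *)
Definition path_supp (t i : nat) : {set 'I_n} :=
  [set j : 'I_n | (i <= j < i + t)%N].

Definition path_ideal (t : nat) : pset :=
  ideal_gen (fun p => exists i, (i < n - t + 1)%N /\ p = xmon (path_supp t i)).

(* Alexander dual: generated by x_C for all vertex covers C *)
Definition path_cover (t : nat) (C : {set 'I_n}) : Prop :=
  forall i, (i < n - t + 1)%N -> C :&: path_supp t i != set0.

Definition path_ideal_dual (t : nat) : pset :=
  ideal_gen (fun p => exists C, path_cover t C /\ p = xmon C).

End Ideals.

(* Main.v *)
Require Import Defs.
From HB Require Import structures.
From mathcomp Require Import all_boot all_order all_algebra.
From mathcomp Require Import mpoly.
From mathcomp Require Import zify.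
From Stdlib Require Import Classical ClassicalEpsilon.
Set Implicit Arguments. Unset Strict Implicit. Unset Printing Implicit Defensive.
Import GRing.Theory.

Section Mon.
Local Open Scope ring_scope.
Variables (K : fieldType) (n : nat).
Local Notation S := {mpoly K[n]}.
Implicit Types (p q h f : S) (m : 'X_{1..n}).

Definition monI (M : 'X_{1..n} -> Prop) : pset K n :=
  fun p => forall m, m \in msupp p -> M m.

Definition upcl (M : 'X_{1..n} -> Prop) := forall m m', M m -> (m <= m')%MM -> M m'.

Lemma monI_ideal M : upcl M -> is_ideal (monI M).
Proof.
move=> uM; split.
- by move=> m; rewrite msupp0.
- move=> a b Ha Hb m /msuppD_le; rewrite mem_cat => /orP[/Ha|/Hb] //.
- move=> r a Ha m /msuppM_le /allpairsP [[m1 m2] /= [_ h2 ->]].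
  by apply: (uM m2); [exact: Ha | exact: lem_addl].
Qed.

Lemma ideal_sum (J : pset K n) (I : Type) (r : seq I) (P : pred I) (F : I -> S) :
  is_ideal J -> (forall i, P i -> J (F i)) -> J (\sum_(i <- r | P i) F i).
Proof.
case=> J0 JD JM HF; elim/big_ind: _ => //.
Qed.

Lemma ideal_gen_ideal (A : pset K n) : is_ideal (ideal_gen A).
Proof.
split.
- by exists [::]; rewrite big_nil.
- move=> a b [la [Ha ->]] [lb [Hb ->]]; exists (la ++ lb); split.
    by move=> q; rewrite mem_cat => /orP[/Ha|/Hb].
  by rewrite big_cat.
- move=> r a [la [Ha ->]]; exists [seq (r * q.1, q.2) | q : S * S <- la]; split.
    by move=> q /mapP [q' /Ha H ->].
  by rewrite big_map mulr_sumr; apply: eq_bigr => q _; rewrite mulrA.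
Qed.

Lemma ideal_gen_sub (A : pset K n) p : A p -> ideal_gen A p.
Proof. by move=> Ap; exists [:: (1, p)]; split; [move=> q; rewrite inE => /eqP -> | rewrite big_seq1 mul1r]. Qed.

Lemma ideal_gen_min (A J : pset K n) p :
  is_ideal J -> (forall q, A q -> J q) -> ideal_gen A p -> J p.
Proof.
move=> iJ HA [l [Hl ->]]; rewrite big_seq_cond; apply: ideal_sum => // q /andP[ql _].
by case: iJ => _ _ JM; apply: JM; apply: HA; apply: Hl.
Qed.

Lemma monI_gen (J : pset K n) M p :
  is_ideal J -> (forall m, M m -> J 'X_[m]) -> monI M p -> J p.
Proof.
move=> iJ HX Hp; rewrite (mpolyE p) big_seq_cond; apply: ideal_sum => // m /andP[mp _].
rewrite -mul_mpolyC; case: iJ => _ _ JM; apply: JM; exact/HX/Hp.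
Qed.

Lemma monIX M m : monI M 'X_[m] <-> M m.
Proof.
split; first by apply; rewrite msuppX mem_seq1.
by move=> Mm m'; rewrite msuppX mem_seq1 => /eqP ->.
Qed.

Lemma monI_ext M1 M2 p : (forall m, M1 m <-> M2 m) -> monI M1 p -> monI M2 p.
Proof. by move=> E H m /H /E. Qed.

Definition genI (Gen : 'X_{1..n} -> Prop) : pset K n :=
  ideal_gen (fun p => exists g, Gen g /\ p = 'X_[g]).

Definition M1 (Gen : 'X_{1..n} -> Prop) m := exists g, Gen g /\ (g <= m)%MM.

Lemma upcl_M1 Gen : upcl (M1 Gen).
Proof. move=> m m' [g [Hg le]] le'; exists g; split=> //; exact: lepm_trans le le'. Qed.

Lemma genIE Gen p : genI Gen p <-> monI (M1 Gen) p.
Proof.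
split.
- apply: ideal_gen_min; first exact/monI_ideal/upcl_M1.
  move=> q [g [Hg ->]]; apply/monIX; exists g; split=> //; exact: lepm_refl.
- apply: monI_gen; first exact: ideal_gen_ideal.
  move=> m [g [Hg le]]; rewrite -(submK le) mpolyXD.
  case: (ideal_gen_ideal (fun p => exists g, Gen g /\ p = 'X_[g])) => _ _ JM.
  by apply: JM; apply: ideal_gen_sub; exists g.
Qed.

End Mon.

Section Pow.
Local Open Scope ring_scope.
Variables (K : fieldType) (n : nat).
Local Notation S := {mpoly K[n]}.
Implicit Types (p q h f : S) (m : 'X_{1..n}).

Definition M12 (A B : 'X_{1..n} -> Prop) m :=
  exists m1 m2, [/\ A m1, B m2 & (m1 + m2 <= m)%MM].

Lemma upcl_M12 A B : upcl (M12 A B).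
Proof. move=> m m' [m1 [m2 [H1 H2 le]]] le'; exists m1, m2; split=> //; exact: lepm_trans le le'. Qed.

Lemma mulE (I J : pset K n) A B :
  upcl A -> upcl B -> (forall p, I p <-> monI A p) -> (forall p, J p <-> monI B p) ->
  forall p, ideal_mul I J p <-> monI (M12 A B) p.
Proof.
move=> uA uB EI EJ p; split.
- apply: ideal_gen_min; first exact/monI_ideal/upcl_M12.
  move=> q [a [b [/EI Ha /EJ Hb ->]]] m /msuppM_le /allpairsP [[m1 m2] /= [h1 h2 ->]].
  exists m1, m2; split; [exact: Ha|exact: Hb|exact: lepm_refl].
- apply: monI_gen; first exact: ideal_gen_ideal.
  move=> m [m1 [m2 [H1 H2 le]]]; rewrite -(submK le) mpolyXD.
  case: (ideal_gen_ideal (fun p => exists a b, [/\ I a, J b & p = a * b])) => _ _ JM.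
  apply: JM; apply: ideal_gen_sub; exists 'X_[m1], 'X_[m2]; split.
  + by apply/EI/monIX.
  + by apply/EJ/monIX.
  + by rewrite mpolyXD.
Qed.

Fixpoint Mp (Gen : 'X_{1..n} -> Prop) (s : nat) : 'X_{1..n} -> Prop :=
  match s with
  | 0 => fun _ => True
  | s'.+1 => fun m => exists g m2, [/\ Gen g, Mp Gen s' m2 & (g + m2 <= m)%MM]
  end.

Lemma upcl_Mp Gen s : upcl (Mp Gen s).
Proof.
case: s => [//|s] m m' [g [m2 [H1 H2 le]]] le'; exists g, m2; split=> //; exact: lepm_trans le le'.
Qed.

Lemma genI_Mp1 Gen p : genI Gen p <-> monI (Mp Gen 1) p.
Proof.
rewrite genIE; split; apply: monI_ext => m; split.
- by case=> g [Hg le]; exists g, 0%MM; split=> //; rewrite addm0.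
- by case=> g [m2 [Hg _ le]]; exists g; split=> //; apply: lepm_trans le; exact: lem_addr.
- by case=> g [m2 [Hg _ le]]; exists g; split=> //; apply: lepm_trans le; exact: lem_addr.
- by case=> g [Hg le]; exists g, 0%MM; split=> //; rewrite addm0.
Qed.

Lemma powE Gen s p : ideal_pow (genI Gen) s p <-> monI (Mp Gen s) p.
Proof.
elim: s p => [|s IH] p.
  by split=> // _ m.
rewrite /ideal_pow iterS -/(ideal_pow _ s).
rewrite (mulE (@upcl_Mp Gen 1) (@upcl_Mp Gen s) (@genI_Mp1 Gen) IH).
split; apply: monI_ext => m; split.
- case=> m1 [m2 [[g [m0 [Hg _ le0]]] H2 le]]; exists g, m2; split=> //.
  apply: lepm_trans le; apply/mnm_lepP => i; rewrite !mnmDE leq_add2r.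
  by move/mnm_lepP: le0 => /(_ i); rewrite mnmDE; apply: leq_trans; apply: leq_addr.
- case=> g [m2 [Hg H2 le]]; exists g, m2; split=> //.
  by exists g, 0%MM; split=> //; rewrite addm0; exact: lepm_refl.
- case=> g [m2 [Hg H2 le]]; exists g, m2; split=> //.
  by exists g, 0%MM; split=> //; rewrite addm0; exact: lepm_refl.
- case=> m1 [m2 [[g [m0 [Hg _ le0]]] H2 le]]; exists g, m2; split=> //.
  apply: lepm_trans le; apply/mnm_lepP => i; rewrite !mnmDE leq_add2r.
  by move/mnm_lepP: le0 => /(_ i); rewrite mnmDE; apply: leq_trans; apply: leq_addr.
Qed.

End Pow.

Section Deg.
Local Open Scope ring_scope.
Variables (K : fieldType) (n : nat).
Local Notation S := {mpoly K[n]}.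
Implicit Types (p q h f : S) (m : 'X_{1..n}) (D C : {set 'I_n}).

Definition deg D m : nat := (\sum_(j in D) m j)%N.

Lemma degD D m1 m2 : deg D (m1 + m2)%MM = (deg D m1 + deg D m2)%N.
Proof. by rewrite /deg -big_split; apply: eq_bigr => j _; rewrite mnmDE. Qed.

Lemma deg_le D m1 m2 : (m1 <= m2)%MM -> (deg D m1 <= deg D m2)%N.
Proof. by move/mnm_lepP => H; apply: leq_sum => j _. Qed.

Lemma deg_sub D' D m : D' \subset D -> (deg D' m <= deg D m)%N.
Proof.
move=> sub; rewrite /deg [X in (_ <= X)%N](big_setID D') /= (setIidPr sub); exact: leq_addr.
Qed.

Lemma deg_ge D m j : j \in D -> (m j <= deg D m)%N.
Proof. by move=> jD; rewrite /deg (bigD1 j) //=; exact: leq_addr. Qed.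

Lemma deg_pos D m : (0 < deg D m)%N -> exists2 j, j \in D & (0 < m j)%N.
Proof.
move=> H; case: (boolP [exists j in D, (0 < m j)%N]) => [/existsP [j /andP[jD pos]]|]; first by exists j.
rewrite negb_exists => /forallP H0; exfalso; move: H; rewrite /deg big1 // => j jD.
by move: (H0 j); rewrite jD /= -eqn0Ngt => /eqP.
Qed.

Definition Qb D s p := all (fun m => s <= deg D m)%N (msupp p).
Definition Q D s : pset K n := monI (fun m => s <= deg D m)%N.

Lemma QP D s p : Q D s p <-> Qb D s p.
Proof. split; [by move=> H; apply/allP => m /H | by move/allP]. Qed.

Lemma upcl_deg D s : upcl (fun m => s <= deg D m)%N.
Proof. by move=> m m' H le; apply: leq_trans H (deg_le D le). Qed.

Lemma Q_ideal D s : is_ideal (Q D s).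
Proof. exact/monI_ideal/upcl_deg. Qed.

Lemma msuppMP p q m : m \in msupp (p * q) ->
  exists m1 m2, [/\ m1 \in msupp p, m2 \in msupp q & m = (m1 + m2)%MM].
Proof. by move/msuppM_le/allpairsP => [[m1 m2] /= [h1 h2 ->]]; exists m1, m2. Qed.

Definition pfilter (P : pred 'X_{1..n}) p : S := \sum_(m <- msupp p | P m) p@_m *: 'X_[m].

Lemma sum_coefE (P : pred 'X_{1..n}) (r : seq 'X_{1..n}) (c : 'X_{1..n} -> K) k :
  uniq r -> \sum_(m <- r | P m) c m * (m == k)%:R = if P k && (k \in r) then c k else 0.
Proof.
elim: r => [|x r IH] /=; first by rewrite big_nil andbF.
case/andP=> xr ur; rewrite big_cons IH // inE.
case: (eqVneq x k) => [<-|ne] /=.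
  by rewrite (negbTE xr) andbF andbT; case: (P x); rewrite ?mulr1 ?addr0.
by case: (P x); rewrite ?mulr0 ?add0r.
Qed.

Lemma pfilterE P p k : (pfilter P p)@_k = if P k then p@_k else 0.
Proof.
rewrite /pfilter raddf_sum /=.
rewrite (eq_bigr (fun m => p@_m * (m == k)%:R)); last by move=> m _; rewrite mcoeffZ mcoeffX.
rewrite sum_coefE ?msupp_uniq //; case: (P k) => //=.
by case: (boolP (k \in msupp p)) => // /memN_msupp_eq0 ->.
Qed.

Lemma pfilter_split P p : p = pfilter P p + pfilter (predC P) p.
Proof. by apply/mpolyP => k; rewrite mcoeffD !pfilterE /=; case: (P k); rewrite ?addr0 ?add0r. Qed.

Lemma pfilter_supp P p m : m \in msupp (pfilter P p) -> P m /\ m \in msupp p.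
Proof.
rewrite !mcoeff_msupp pfilterE; case: (P m) => //; by rewrite eqxx.
Qed.

(* key lemma: lowest degree parts multiply *)
Lemma key D p q a b ma mb :
  (forall m, m \in msupp p -> a <= deg D m)%N -> ma \in msupp p -> deg D ma = a ->
  (forall m, m \in msupp q -> b <= deg D m)%N -> mb \in msupp q -> deg D mb = b ->
  exists2 m, m \in msupp (p * q) & deg D m = (a + b)%N.
Proof.
move=> Hp ma_p dma Hq mb_q dmb.
pose Pa := fun m : 'X_{1..n} => deg D m == a.
pose Pb := fun m : 'X_{1..n} => deg D m == b.
have split_pq : p * q = pfilter Pa p * pfilter Pb q + (pfilter Pa p * pfilter (predC Pb) q + pfilter (predC Pa) p * q).
  rewrite addrA -mulrDr -(pfilter_split Pb q) -mulrDl -(pfilter_split Pa p) //.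
set p0 := pfilter Pa p; set p1 := pfilter (predC Pa) p.
set q0 := pfilter Pb q; set q1 := pfilter (predC Pb) q.
have p0n : p0 != 0.
  apply/eqP => /(congr1 (mcoeff ma)); rewrite pfilterE /Pa dma eqxx mcoeff0 => /eqP.
  by rewrite mcoeff_eq0 ma_p.
have q0n : q0 != 0.
  apply/eqP => /(congr1 (mcoeff mb)); rewrite pfilterE /Pb dmb eqxx mcoeff0 => /eqP.
  by rewrite mcoeff_eq0 mb_q.
have pq0n : p0 * q0 != 0 by rewrite mulf_neq0.
set m := mlead (p0 * q0).
have m_in : m \in msupp (p0 * q0) by exact: mlead_supp.
have dm : deg D m = (a + b)%N.
  case/msuppMP: m_in => m1 [m2 [/pfilter_supp [/eqP h1 _] /pfilter_supp [/eqP h2 _] ->]].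
  by rewrite degD h1 h2.
have R0 : (p0 * q1 + p1 * q)@_m = 0.
  apply/eqP; rewrite mcoeff_eq0; apply/negP => /msuppD_le; rewrite mem_cat => /orP[].
  - case/msuppMP => m1 [m2 [/pfilter_supp [/eqP h1 _] /pfilter_supp [h2 /Hq h2'] E]].
    move: dm; rewrite E degD h1 => /eqP; rewrite eqn_add2l => /eqP H.
    by move: h2; rewrite /= /Pb H eqxx.
  - case/msuppMP => m1 [m2 [/pfilter_supp [h1 /Hp h1'] /Hq h2 E]].
    move: dm; rewrite E degD => /eqP; rewrite eqn_leq => /andP[le _].
    move: h1; rewrite /= /Pa eqn_leq h1' andbT -ltnNge => h1.
    by move: (leq_add h1 h2); rewrite addSn ltnNge le.
exists m => //; rewrite mcoeff_msupp split_pq mcoeffD R0 addr0 -mcoeff_msupp //.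
Qed.

Lemma minpart D p m0 : m0 \in msupp p ->
  exists b mb, [/\ (forall m, m \in msupp p -> b <= deg D m)%N, mb \in msupp p, deg D mb = b
                 & (b <= deg D m0)%N].
Proof.
move=> m0p.
have ex : exists b, has (fun m => deg D m == b) (msupp p).
  by exists (deg D m0); apply/hasP; exists m0.
case: (ex_minnP ex) => b /hasP [mb mbp /eqP dmb] minb.
exists b, mb; split=> //.
  by move=> m mp; apply: minb; apply/hasP; exists m.
by apply: minb; apply/hasP; exists m0.
Qed.

Lemma primary D s p q : Q D s (p * q) -> ~ Q D s q -> Q D 1 p.
Proof.
move=> /QP Hpq nQ; have Hq : ~~ Qb D s q by apply/negP => /QP.
apply/QP; apply/allP => m mp; rewrite lt0n; apply/negP => /eqP dm0.
move: Hq; rewrite /Qb -has_predC => /hasP [m1 m1q]; rewrite /= -ltnNge => lt1.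
case: (minpart D m1q) => b [mb [Hb mbq dmb leb]].
have [m' m'in dm'] := key (a := 0%N) (fun m _ => leq0n (deg D m)) mp dm0 Hb mbq dmb.
move/allP: Hpq => /(_ m' m'in); rewrite dm' add0n leqNgt.
by rewrite (leq_ltn_trans leb lt1).
Qed.

End Deg.

Section Ass.
Local Open Scope ring_scope.
Variables (K : fieldType) (n : nat).
Local Notation S := {mpoly K[n]}.
Implicit Types (p q h f : S) (m : 'X_{1..n}) (D C : {set 'I_n}).
Local Notation Q := (@Q K n).

Lemma notP_pow (P : pset K n) x k : is_prime_ideal P -> ~ P x -> ~ P (x ^+ k).
Proof.
case=> _ n1 pr nx; elim: k => [|k IH]; first by rewrite expr0.
by rewrite exprS => /pr [].
Qed.

Lemma deg0 D : deg D (0%MM : 'X_{1..n}) = 0%N.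
Proof. by rewrite /deg big1 // => j _; rewrite mnm0E. Qed.

Lemma degU D a : deg D (U_(a) : 'X_{1..n})%MM = (a \in D).
Proof.
case: (boolP (a \in D)) => aD.
  by rewrite /deg (bigD1 a) //= mnm1E eqxx big1 // => j /andP[_ ne]; rewrite mnm1E eq_sym (negbTE ne).
by rewrite /deg big1 // => j jD; rewrite mnm1E; case: eqP => // E; rewrite E jD in aD.
Qed.

Lemma QX D s m : Q D s 'X_[m] <-> (s <= deg D m)%N.
Proof. exact: monIX. Qed.

Lemma assE (F : pred {set 'I_n}) s (J : pset K n) :
  (1 <= s)%N -> (forall C, F C -> C != set0) ->
  (forall p, J p <-> (forall C, F C -> Q C s p)) ->
  forall P, is_assoc_prime J P <->
    exists D, [/\ F D, (forall D', F D' -> D' \subset D -> D' = D) & forall g, P g <-> Q D 1 g].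
Proof.
move=> s1 Fne EJ P; split.
- case=> [[iP n1 pr] [f Hf]].
  have nJf : ~ J f by move=> Jf; apply: n1; apply/Hf; rewrite mul1r.
  pose T D := F D && ~~ Qb D s f.
  pose A := [set a : 'I_n | if excluded_middle_informative (P 'X_a) then false else true].
  have inA a : a \in A <-> ~ P 'X_a.
    rewrite inE; case: excluded_middle_informative => //.
  have [D [TD DA]] : exists D, T D /\ (forall a, a \in D -> P 'X_a).
    apply: NNPP => nex.
    pose mA : 'X_{1..n} := [multinom (if i \in A then s else 0%N) | i < n].
    have PmA : P ('X_[mA] * 1).
      apply/Hf; apply/EJ => C FC; case: (boolP (Qb C s f)) => [/QP Qf|nQf].
      - rewrite mulr1; case: (@Q_ideal K n C s) => _ _ JM; exact: JM.
      - have [a aC aA] : exists2 a, a \in C & a \in A.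
          apply: NNPP => nn; apply: nex; exists C; split; first by rewrite /T FC nQf.
          move=> a aC; apply: NNPP => nPa; apply: nn; exists a => //; exact/inA.
        move=> m; rewrite mulr1 => /msuppMP [m1 [m2 [m1in m2in ->]]].
        move: m1in; rewrite msuppX mem_seq1 => /eqP ->.
        apply: leq_trans (deg_le C (lem_addr mA m2)).
        by apply: leq_trans (deg_ge mA aC); rewrite mnmE aA.
    move: PmA; rewrite mulr1 mpolyXE_id; apply: (@big_ind _ (fun x => ~ P x)).
    + by [].
    + by move=> x y nx ny /pr [].
    + move=> i _; rewrite mnmE; case: (boolP (i \in A)) => iA.
        by apply: notP_pow => //; exact/inA.
      by rewrite expr0.
  have QsubP g : Q D 1 g -> P g.
    apply: monI_gen => // m /deg_pos [a aD pos].
    have le : (U_(a) <= m)%MM by rewrite lep1mP -lt0n.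
    rewrite -(submK le) mpolyXD; case: iP => _ _ JM; exact/JM/DA.
  have PsubQ D' g : F D' -> ~~ Qb D' s f -> P g -> Q D' 1 g.
    move=> FD' nQ /Hf /EJ /(_ D' FD') Qgf; apply: primary Qgf _.
    by move/QP; apply/negP.
  case/andP: TD => FD nQD.
  exists D; split=> //.
  + move=> D' FD' sub; case: (boolP (Qb D' s f)) => [Q'|nQ'].
      exfalso; move/negP: nQD; apply; apply/allP => m mf.
      by move/allP: Q' => /(_ m mf) H; apply: leq_trans H (deg_sub m sub).
    apply/eqP; rewrite eqEsubset sub /=; apply/subsetP => a aD.
    have := PsubQ D' _ FD' nQ' (DA a aD); move/QX; rewrite degU; by case: (a \in D').
  + move=> g; split; [exact: PsubQ | exact: QsubP].
- case=> D [FD minD EP].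
  have [a aD] : exists a, a \in D by apply/set0Pn/Fne.
  pose mf : 'X_{1..n} := [multinom (if i \in D then (if i == a then s.-1 else 0) else s)%N | i < n].
  have dmf : deg D mf = s.-1.
    rewrite /deg (bigD1 a) //= mnmE aD eqxx big1 ?addn0 // => j /andP[jD ne].
    by rewrite mnmE jD (negbTE ne).
  have nQf : ~ Q D s 'X_[mf].
    move/QX; rewrite dmf; move: s1; case: (s) => // s' _; by rewrite ltnn.
  have Qprime : forall x y, Q D 1 (x * y) -> Q D 1 x \/ Q D 1 y.
    move=> x y Hxy; case: (classic (Q D 1 y)) => Hy; [by right | left; exact: primary Hxy Hy].
  split.
  + split.
    * case: (@Q_ideal K n D 1) => Q0 QD QM; split.
      -- exact/EP.
      -- by move=> x y /EP Hx /EP Hy; apply/EP; apply: QD.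
      -- by move=> r x /EP Hx; apply/EP; apply: QM.
    * move/EP; rewrite -mpolyX0; move/QX; by rewrite deg0.
    * by move=> x y /EP /Qprime [] /EP; [left|right].
  + exists 'X_[mf] => g; split.
    * move/EP => Qg; apply/EJ => C FC; case: (eqVneq C D) => [->|ne].
        move=> m /msuppMP [m1 [m2 [m1in m2in ->]]].
        move: m2in; rewrite msuppX mem_seq1 => /eqP ->.
        rewrite degD dmf; move: (Qg m1 m1in); case: (s) s1 => // s' _ /=.
        by move=> H; rewrite -[s'.+1]add1n leq_add2r.
      have [j jC jD] : exists2 j, j \in C & j \notin D.
        apply/subsetPn; apply/negP => sub; move: ne; rewrite (minD C FC sub) eqxx //.
      have QCf : Q C s 'X_[mf].
        apply/QX; apply: leq_trans (deg_ge mf jC); by rewrite mnmE (negbTE jD).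
      by case: (@Q_ideal K n C s) => _ _ JM; apply: JM.
    * move/EJ => /(_ D FD) Qgf; apply/EP; exact: primary Qgf nQf.
Qed.

End Ass.

Section Comb.
Variables (n t : nat).
Implicit Types (m : 'X_{1..n}) (D C : {set 'I_n}).

Definition ind (G : {set 'I_n}) : 'X_{1..n} := [multinom ((j \in G) : nat) | j < n].

Lemma degU' D (G : {set 'I_n}) j : j \in D -> j \in G -> (1 <= deg D (ind G))%N.
Proof. by move=> jD jG; apply: leq_trans (deg_ge _ jD); rewrite mnmE jG. Qed.

Lemma Mp_deg (Gen : 'X_{1..n} -> Prop) C s m :
  (forall g, Gen g -> 1 <= deg C g)%N -> Mp Gen s m -> (s <= deg C m)%N.
Proof.
move=> HG; elim: s m => [//|s IH] m [g [m2 [Hg H2 le]]].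
apply: leq_trans (deg_le C le); rewrite degD -add1n; apply: leq_add; [exact: HG | exact: IH].
Qed.

Lemma deg_setU A B m : (deg (A :|: B) m <= deg A m + deg B m)%N.
Proof.
rewrite /deg (big_setID A) /= setUK setDUl setDv set0U; apply: leq_add => //.
rewrite [X in (_ <= X)%N](big_setID A) /=; exact: leq_addl.
Qed.

Lemma deg_set0' m : deg [set j | m j == 0%N] m = 0%N.
Proof. by rewrite /deg big1 // => j; rewrite inE => /eqP. Qed.

Lemma deg_set1 j m : deg [set j] m = m j.
Proof. by rewrite /deg big_set1. Qed.

Definition Fp C := [forall i : 'I_(n - t + 1), C :&: path_supp n t i != set0].

Definition GenP (g : 'X_{1..n}) := exists i, (i < n - t + 1)%N /\ g = ind (path_supp n t i).

Lemma path_comb s m : Mp GenP s m <-> (forall C, Fp C -> s <= deg C m)%N.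
Proof.
split.
  move=> H C FC; apply: Mp_deg H => g [i [hi ->]].
  have := forallP FC (Ordinal hi); case/set0Pn => j; rewrite inE => /andP[jC jG].
  exact: degU' jC jG.
elim: s m => [//|s IH] m H.
pose pos i := (i < n - t + 1)%N && [forall j in path_supp n t i, (0 < m j)%N].
have expos : exists i, pos i.
  apply: NNPP => nex.
  have FZ : Fp [set j | m j == 0%N].
    apply/forallP => i; apply/set0Pn.
    case: (boolP [forall j in path_supp n t i, (0 < m j)%N]) => [Hall|].
      by exfalso; apply: nex; exists i; rewrite /pos Hall ltn_ord.
    rewrite negb_forall => /existsP [j]; rewrite negb_imply -eqn0Ngt => /andP[jG j0].
    by exists j; rewrite in_setI jG andbT inE j0.
  by move: (H _ FZ); rewrite deg_set0'.
case: (ex_minnP expos) => i /andP[hi /forallP posi] mini.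
set G := path_supp n t i.
have indle : (ind G <= m)%MM.
  apply/mnm_lepP => j; rewrite mnmE; case: (boolP (j \in G)) => // jG.
  by move: (posi j); rewrite jG.
exists (ind G), (m - ind G)%MM; split.
- by exists i.
- apply: IH => C FC.
  have := forallP FC (Ordinal hi); case/set0Pn => c0; rewrite inE => /andP[c0C c0G].
  have c0CG : c0 \in C :&: G by rewrite inE c0C c0G.
  case: (arg_maxnP (fun j : 'I_n => val j) c0CG) => c /setIP [cC cG] cmax.
  set C' := (C :\: G) :|: [set j | m j == 0%N] :|: [set c].
  have FC' : Fp C'.
    apply/forallP => l; apply/set0Pn.
    case: (ltnP l i) => [li|il].
      have npos : ~~ pos l by apply: contraTN li => /mini; rewrite -leqNgt.
      move: npos; rewrite /pos ltn_ord /= negb_forall => /existsP [z].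
      rewrite negb_imply -eqn0Ngt => /andP[zG z0].
      by exists z; apply/setIP; split => //; apply/setUP; left; apply/setUP; right; rewrite inE z0.
    have := forallP FC l; case/set0Pn => p; rewrite inE => /andP[pC pG].
    case: (boolP (p \in G)) => pGi.
      have pc : (p <= c)%N by apply: cmax; apply/setIP; split.
      exists c; apply/setIP; split; first by apply/setUP; right; rewrite inE.
      move: pG cG; rewrite /G !inE => /andP[lp pl] /andP[ic ci].
      apply/andP; split; lia.
    by exists p; apply/setIP; split => //; apply/setUP; left; apply/setUP; left; rewrite inE pC pGi.
  have H1 := H _ FC'.
  have H2 : (deg C' m <= deg (C :\: G) m + m c)%N.
    apply: leq_trans (deg_setU _ _ m) _; rewrite deg_set1 leq_add2r.
    by apply: leq_trans (deg_setU _ _ m) _; rewrite deg_set0' addn0.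
  have H3 : (m c - 1 + deg (C :\: G) m <= deg C (m - ind G)%MM)%N.
    rewrite /deg [X in (_ <= X)%N](big_setID G) /=; apply: leq_add.
      have cCG : c \in C :&: G by rewrite inE cC cG.
      by apply: leq_trans (deg_ge _ cCG); rewrite mnmBE mnmE cG.
    rewrite leq_eqVlt; apply/orP; left; apply/eqP; apply: eq_bigr => j.
    by rewrite inE => /andP[jG _]; rewrite mnmBE mnmE (negbTE jG) subn0.
  have mc : (0 < m c)%N by move: (posi c); rewrite cG.
  lia.
- by rewrite addmC (submK indle) lepm_refl.
Qed.

End Comb.

Section Dual.
Variables (n t : nat).
Implicit Types (m : 'X_{1..n}) (D C : {set 'I_n}).

Lemma Mp_list (Gen : 'X_{1..n} -> Prop) (l : seq 'X_{1..n}) m :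
  (forall g, g \in l -> Gen g) -> ((\sum_(g <- l) g)%MM <= m)%MM -> Mp Gen (size l) m.
Proof.
elim: l m => [//|g l IH] m Hl le /=.
exists g, (\sum_(g <- l) g)%MM; split.
- by apply: Hl; rewrite mem_head.
- apply: IH; first by move=> x xl; apply: Hl; rewrite inE xl orbT.
  exact: lepm_refl.
- by rewrite big_cons in le.
Qed.

Lemma count_sum (T : Type) (a : pred T) (r : seq T) : count a r = (\sum_(x <- r) a x)%N.
Proof. by elim: r => [|x r IH] /=; rewrite ?big_nil ?big_cons ?IH. Qed.

Lemma ivt (f : nat -> nat) : (forall j, f j <= f j.+1)%N ->
  forall a b u, (f a <= u)%N -> (u < f b)%N -> exists j, [/\ a <= j, j < b, f j <= u & u < f j.+1]%N.
Proof.
move=> mono a b u; have hl := homo_leq leqnn (fun y x z => @leq_trans y x z) mono.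
elim: b => [|b IH] fa ub.
  by exfalso; have := hl 0%N a (leq0n a); lia.
case: (ltnP u (f b)) => [ub'|bu].
  by case: (IH fa ub') => j [h1 h2 h3 h4]; exists j; split => //; lia.
exists b; split => //.
case: (leqP a b) => // ba; have := hl b.+1 a ba; lia.
Qed.

Definition Fd W := [exists i : 'I_(n - t + 1), W == path_supp n t i].
Definition GenD (g : 'X_{1..n}) := exists C, path_cover t C /\ g = ind C.

Section PfS.
Variable m : 'X_{1..n}.
Definition Pf (j : nat) := (\sum_(l < n | (l < j)%N) m l)%N.

Lemma Pf_split a b : (a <= b)%N -> Pf b = (Pf a + \sum_(l < n | a <= l < b) m l)%N.
Proof.
move=> ab; rewrite /Pf [in RHS]big_mkcond [X in (_ + X)%N]big_mkcond /= -big_split /= big_mkcond /=.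
apply: eq_bigr => l _; case: (ltnP l a) => la; case: (ltnP l b) => lb /=; rewrite ?addn0 ?add0n //; lia.
Qed.

Lemma Pf_S j (hj : (j < n)%N) : Pf j.+1 = (Pf j + m (Ordinal hj))%N.
Proof.
rewrite (Pf_split (leqnSn j)); congr (_ + _)%N.
rewrite (big_pred1 (Ordinal hj)) // => l /=; apply/andP/eqP.
  by case=> h1 h2; apply: val_inj => /=; lia.
by move=> ->; split => /=.
Qed.

Lemma Pf_mono j : (Pf j <= Pf j.+1)%N.
Proof. by rewrite (Pf_split (leqnSn j)) leq_addr. Qed.

Lemma deg_window i : deg (path_supp n t i) m = (\sum_(l < n | i <= l < i + t) m l)%N.
Proof. by rewrite /deg; apply: eq_bigl => l; rewrite inE. Qed.
End PfS.

Lemma dual_comb s m : (1 <= t)%N -> (t <= n)%N -> Mp GenD s m <-> (forall W, Fd W -> s <= deg W m)%N.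
Proof.
move=> t1 tn; split.
  move=> H W /existsP [i /eqP ->]; apply: Mp_deg H => g [C [cov ->]].
  have := cov i (ltn_ord i); case/set0Pn => j; rewrite inE => /andP[jC jG].
  exact: degU' jG jC.
case: s => [//|s'] H; set s := s'.+1.
pose Ck k := [set j : 'I_n | has (fun u => u %% s == k)%N (iota (Pf m j) (m j))].
pose l := [seq ind (Ck k) | k <- iota 0 s].
have -> : s = size l by rewrite size_map size_iota.
apply: Mp_list.
- move=> g /mapP [k]; rewrite mem_iota add0n => /andP[_ ks] ->; exists (Ck k); split => //.
  move=> i hi; apply/set0Pn.
  have it : (i + t <= n)%N by lia.
  have Fi : Fd (path_supp n t i) by apply/existsP; exists (Ordinal hi).
  have Hd := H _ Fi.
  rewrite deg_window -/s in Hd.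
  have Hb : (Pf m i + s <= Pf m (i + t))%N by rewrite (Pf_split m (leq_addr t i)) leq_add2l.
  set q := (Pf m i %/ s)%N; set r := (Pf m i %% s)%N.
  have Pq : Pf m i = (q * s + r)%N by rewrite [LHS](divn_eq _ s).
  have rs : (r < s)%N by rewrite ltn_mod.
  pose u := if (r <= k)%N then (q * s + k)%N else (q.+1 * s + k)%N.
  have umod : (u %% s = k)%N.
    by rewrite /u; case: ifP => _; rewrite modnMDl modn_small.
  have u1 : (Pf m i <= u)%N by rewrite /u Pq; case: ifP; rewrite ?mulSn; lia.
  have u2 : (u < Pf m (i + t))%N.
    apply: leq_trans Hb; rewrite /u Pq; case: ifP; rewrite ?mulSn; lia.
  case: (ivt (Pf_mono m) u1 u2) => j [ij jit h3 h4].
  have jn : (j < n)%N by lia.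
  exists (Ordinal jn); rewrite !inE /=; apply/andP; split.
    apply/hasP; exists u; last by rewrite umod. rewrite mem_iota h3 /=.
    by rewrite (Pf_S m jn) in h4.
  by apply/andP; split.
- apply/mnm_lepP => j; rewrite mnm_sumE big_map.
  apply: (@leq_trans (\sum_(k <- iota 0 s) count (fun u => u %% s == k)%N (iota (Pf m j) (m j)))).
    apply: leq_sum => k _; rewrite mnmE inE; case: hasP => [[x xin xk]|_] //=.
    by rewrite -has_count; apply/hasP; exists x.
  under eq_bigr => k _ do rewrite count_sum.
  rewrite exchange_big /=.
  rewrite (eq_bigr (fun _ => 1%N)) ?sum1_size ?size_iota //.
  move=> u _; rewrite -count_sum.
  rewrite (@eq_count _ _ (pred1 (u %% s)%N)); last by move=> k; rewrite /= eq_sym.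
  rewrite count_uniq_mem; last exact: (iota_uniq 0 s).
  change ((((u %% s)%N \in iota 0 s) : nat) = 1%N); by rewrite mem_iota add0n ltn_mod.
Qed.

End Dual.

Section Final.
Local Open Scope ring_scope.
Variables (K : fieldType) (n : nat).
Local Notation S := {mpoly K[n]}.

Lemma ideal_gen_ext (A B : pset K n) : (forall p, A p <-> B p) ->
  forall p, ideal_gen A p <-> ideal_gen B p.
Proof.
by move=> E p; split; case=> l [Hl ->]; exists l; split => // q /Hl /E.
Qed.

Lemma ideal_pow_ext (I I' : pset K n) : (forall p, I p <-> I' p) ->
  forall s p, ideal_pow I s p <-> ideal_pow I' s p.
Proof.
move=> E; elim=> [//|s IH] p; rewrite /ideal_pow !iterS -!/(ideal_pow _ s).
apply: ideal_gen_ext => q; split; case=> a [b [Ha Hb ->]]; exists a, b; split=> //.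
- exact/E. - exact/IH. - exact/E. - exact/IH.
Qed.

Lemma xmonE (G : {set 'I_n}) : xmon K G = 'X_[ind G].
Proof.
rewrite /xmon mprodXE; congr ('X_[_]); apply/mnmP => i.
rewrite mnm_sumE mnmE.
case: (boolP (i \in G)) => iG.
  rewrite (bigD1 i) //= mnm1E eqxx big1 ?addn0 // => j /andP[_ ne].
  by rewrite mnm1E (negbTE ne).
by rewrite big1 // => j jG; rewrite mnm1E; case: eqP => // E; rewrite -E jG in iG.
Qed.

Lemma ntf_gen (Gen : 'X_{1..n} -> Prop) (F : pred {set 'I_n}) (I : pset K n) :
  (forall C, F C -> C != set0) ->
  (forall s m, Mp Gen s m <-> (forall C, F C -> s <= deg C m)%N) ->
  (forall p, I p <-> genI Gen p) -> normally_torsion_free I.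
Proof.
move=> Fne comb EI.
have JE : forall s p, ideal_pow I s p <-> (forall C, F C -> @Q K n C s p).
  move=> s p; rewrite (ideal_pow_ext EI) powE; split.
  - by move=> H C FC m /H /comb; apply.
  - by move=> H m mp; apply/comb => C FC; apply: H.
have IE : forall p, I p <-> (forall C, F C -> @Q K n C 1 p).
  move=> p; rewrite EI genI_Mp1; split.
  - by move=> H C FC m /H /comb; apply.
  - by move=> H m mp; apply/comb => C FC; apply: H.
move=> s s1 P; rewrite (assE s1 Fne (JE s)) (assE (leqnn 1) Fne IE); done.
Qed.

End Final.

Theorem theorem2p3 (K : fieldType) (n t : nat) :
  (1 <= t)%N -> (t <= n)%N ->
  normally_torsion_free (@path_ideal K n t) /\
  normally_torsion_free (@path_ideal_dual K n t).
Proof.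
move=> t1 tn; split.
- apply: (@ntf_gen K n (@GenP n t) (@Fp n t) (@path_ideal K n t)).
  + move=> C FC; have h0 : (0 < n - t + 1)%N by rewrite addn1.
    have := forallP FC (Ordinal h0); apply: contraNN => /eqP ->; by rewrite set0I.
  + exact: path_comb.
  + apply: ideal_gen_ext => p; split.
    * by case=> i [hi ->]; exists (ind (path_supp n t i)); rewrite xmonE; split => //; exists i.
    * by case=> g [[i [hi ->]] ->]; exists i; rewrite xmonE.
- apply: (@ntf_gen K n (@GenD n t) (@Fd n t) (@path_ideal_dual K n t)).
  + move=> W /existsP [i /eqP ->]; apply/set0Pn.
    have hi : (i < n)%N by have := ltn_ord i; lia.
    by exists (Ordinal hi); rewrite inE /= leqnn /=; lia.
  + by move=> s m; apply: dual_comb.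
  + apply: ideal_gen_ext => p; split.
    * by case=> C [cov ->]; exists (ind C); rewrite xmonE; split => //; exists C.
    * by case=> g [[C [cov ->]] ->]; exists C; rewrite xmonE.
Qed.
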